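(* Let $N\ge2$, $\beta>0$, real $\Delta_1,\dots,\Delta_4\in(0,2\pi)$ with $\sum_{I=1}^4\Delta_I=2\pi$, and integers $n_1,\dots,n_N,\tilde n_1,\dots,\tilde n_N$. Put $\bar n=\frac1N\sum_jn_j$, $\bar{\tilde n}=\frac1N\sum_j\tilde n_j$, $C=\Delta_3\Delta_4-\Delta_1\Delta_2$ and $$u_j=-\frac{i\beta}{N}(n_j-\bar n),\quad \tilde u_j=\frac{i\beta}{N}(\tilde n_j-\bar{\tilde n}),\quad v=\frac{iN}{\beta}C+2\pi\bar n,\quad \tilde v=-\frac{iN}{\beta}C-2\pi\bar{\tilde n}.$$ Define $E_{ij}=\sum_{a=1,2}F'(u_i-\tilde u_j+\Delta_a)-\sum_{b=3,4}F'(\tilde u_j-u_i+\Delta_b)$. Then $\sum_iu_i=\sum_i\tilde u_i=0$ and for all $i,j\in\{1,\dots,N\}$ $$0=-2\pi i n_i+iv+\frac1\beta\sum_{k=1}^NE_{ik},\qquad 0=-2\pi i\tilde n_j-i\tilde v+\frac1\beta\sum_{k=1}^NE_{kj}.$$ Moreover the function $$\mathcal V=2\pi\sum_{i=1}^N(n_iu_i-\tilde n_i\tilde u_i)-\sum_{i=1}^N(v\,u_i+\tilde v\,\tilde u_i)+\frac i\beta\sum_{i,j=1}^N\Big[\sum_{a=1,2}F(u_i-\tilde u_j+\Delta_a)+\sum_{b=3,4}F(\tilde u_j-u_i+\Delta_b)\Big]$$ evaluated at this configuration equals $\frac{iN^2}{\beta}\sum_{I=1}^4F(\Delta_I)+O(\beta)=\frac{iN^2}{2\beta}\sum_{a<b<c}\Delta_a\Delta_b\Delta_c+O(\beta)$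 as $\beta\to0^+$ with the integers fixed.
   Context: For complex $w$: $F(w)=\frac{w^3}{6}-\frac12\pi w^2\,\mathrm{sign}(\mathrm{Re}\,w)+\frac{\pi^2}{3}w$ and $F'(w)=\frac{w^2}{2}-\pi w\,\mathrm{sign}(\mathrm{Re}\,w)+\frac{\pi^2}{3}$. The sum $\sum_{a<b<c}$ runs over triples in $\{1,2,3,4\}$. The displayed equations are the high-temperature limit (torus modulus $\tau=i\beta/2\pi$) of the Bethe ansatz equations for the topologically twisted index of the Klebanov–Witten $\mathrm{SU}(N)\times\mathrm{SU}(N)$ conifold theory on $S^2\times T^2$, with bi-fundamentals $A_{1,2}$ (chemical potentials $\Delta_{1,2}$) and $B_{1,2}$ (chemical potentials $\Delta_{3,4}$), holonomies $u_i,\tilde u_j$ of the two gauge groups, Lagrange multipliers $v,\tilde v$ for the two $\mathrm{SU}(N)$ constraints, and $\mathcal V$ the Bethe potential. *)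

(* Defs.v *)
From Stdlib Require Import Reals ZArith List.
Open Scope R_scope.

Record Cx := mkC { Re : R; Im : R }.

Definition Cadd (z w : Cx) : Cx := mkC (Re z + Re w) (Im z + Im w).
Definition Copp (z : Cx) : Cx := mkC (- Re z) (- Im z).
Definition Csub (z w : Cx) : Cx := Cadd z (Copp w).
Definition Cmul (z w : Cx) : Cx :=
  mkC (Re z * Re w - Im z * Im w) (Re z * Im w + Im z * Re w).
Definition RtoC (r : R) : Cx := mkC r 0.
Definition Ci : Cx := mkC 0 1.
Definition C0 : Cx := mkC 0 0.
Definition Cmod (z : Cx) : R := sqrt (Re z ^ 2 + Im z ^ 2).

Fixpoint Csum (n : nat) (f : nat -> Cx) : Cx :=
  match n with O => C0 | S m => Cadd (Csum m f) (f m) end.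
Fixpoint Rsum (n : nat) (f : nat -> R) : R :=
  match n with O => 0 | S m => Rsum m f + f m end.

Definition Rsgn (x : R) : R :=
  if Rlt_dec 0 x then 1 else if Rlt_dec x 0 then -1 else 0.

Definition Fpot (w : Cx) : Cx :=
  Cadd (Csub (Cmul (RtoC (1/6)) (Cmul w (Cmul w w)))
             (Cmul (RtoC (1/2 * PI * Rsgn (Re w))) (Cmul w w)))
       (Cmul (RtoC (PI^2/3)) w).

Definition Fprime (w : Cx) : Cx :=
  Cadd (Csub (Cmul (RtoC (1/2)) (Cmul w w))
             (Cmul (RtoC (PI * Rsgn (Re w))) w))
       (RtoC (PI^2/3)).

Definition nbar (N : nat) (n : nat -> Z) : R := / INR N * Rsum N (fun j => IZR (n j)).

Definition uconf (N : nat) (beta : R) (n : nat -> Z) (j : nat) : Cx :=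
  mkC 0 (- (beta / INR N) * (IZR (n j) - nbar N n)).
Definition utconf (N : nat) (beta : R) (nt : nat -> Z) (j : nat) : Cx :=
  mkC 0 ((beta / INR N) * (IZR (nt j) - nbar N nt)).

Definition Cconst (d1 d2 d3 d4 : R) : R := d3 * d4 - d1 * d2.

Definition vconf (N : nat) (beta d1 d2 d3 d4 : R) (n : nat -> Z) : Cx :=
  mkC (2 * PI * nbar N n) (INR N / beta * Cconst d1 d2 d3 d4).
Definition vtconf (N : nat) (beta d1 d2 d3 d4 : R) (nt : nat -> Z) : Cx :=
  mkC (- (2 * PI * nbar N nt)) (- (INR N / beta * Cconst d1 d2 d3 d4)).

Definition Eij (d1 d2 d3 d4 : R) (ui utj : Cx) : Cx :=
  Csub (Cadd (Fprime (Cadd (Csub ui utj) (RtoC d1)))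
             (Fprime (Cadd (Csub ui utj) (RtoC d2))))
       (Cadd (Fprime (Cadd (Csub utj ui) (RtoC d3)))
             (Fprime (Cadd (Csub utj ui) (RtoC d4)))).

Definition Wij (d1 d2 d3 d4 : R) (ui utj : Cx) : Cx :=
  Cadd (Cadd (Fpot (Cadd (Csub ui utj) (RtoC d1)))
             (Fpot (Cadd (Csub ui utj) (RtoC d2))))
       (Cadd (Fpot (Cadd (Csub utj ui) (RtoC d3)))
             (Fpot (Cadd (Csub utj ui) (RtoC d4)))).

Definition Bethe (N : nat) (beta d1 d2 d3 d4 : R) (n nt : nat -> Z)
    (u ut : nat -> Cx) (v vt : Cx) : Cx :=
  Cadd (Csub
    (Cmul (RtoC (2 * PI))
          (Csum N (fun i => Csub (Cmul (RtoC (IZR (n i))) (u i))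
                                 (Cmul (RtoC (IZR (nt i))) (ut i)))))
    (Csum N (fun i => Cadd (Cmul v (u i)) (Cmul vt (ut i)))))
   (Cmul (Cmul Ci (RtoC (/ beta)))
         (Csum N (fun i => Csum N (fun j => Wij d1 d2 d3 d4 (u i) (ut j))))).

(* Main.v *)
Require Import Defs.
From Stdlib Require Import Reals ZArith List Lra Lia.
Open Scope R_scope.

Lemma Rsgn_pos x : 0 < x -> Rsgn x = 1.
Proof. intro H; unfold Rsgn; destruct (Rlt_dec 0 x); [reflexivity| lra]. Qed.

Definition Fr (d : R) := d^3/6 - 1/2*PI*d^2 + PI^2/3*d.

Lemma Eij_val d1 d2 d3 d4 a b : 0 < d1 -> 0 < d2 -> 0 < d3 -> 0 < d4 ->
  d1 + d2 + d3 + d4 = 2 * PI ->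
  Eij d1 d2 d3 d4 (mkC 0 a) (mkC 0 b) = mkC (Cconst d1 d2 d3 d4) (-2*PI*(a-b)).
Proof.
  intros; unfold Eij, Fprime, Csub, Cadd, Copp, Cmul, RtoC, Cconst; simpl.
  repeat rewrite Rsgn_pos by lra.
  assert (E : d4 = 2*PI - d1 - d2 - d3) by lra. subst d4.
  f_equal; field.
Qed.

Lemma Wij_val d1 d2 d3 d4 a b : 0 < d1 -> 0 < d2 -> 0 < d3 -> 0 < d4 ->
  d1 + d2 + d3 + d4 = 2 * PI ->
  Wij d1 d2 d3 d4 (mkC 0 a) (mkC 0 b) =
  mkC (Fr d1 + Fr d2 + Fr d3 + Fr d4 + PI*(a-b)^2) (Cconst d1 d2 d3 d4 * (a-b)).
Proof.
  intros; unfold Wij, Fpot, Fr, Csub, Cadd, Copp, Cmul, RtoC, Cconst; simpl.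
  repeat rewrite Rsgn_pos by lra.
  assert (E : d4 = 2*PI - d1 - d2 - d3) by lra. subst d4.
  f_equal; field.
Qed.

Lemma Fpot_val d : 0 < d -> Fpot (RtoC d) = mkC (Fr d) 0.
Proof.
  intros; unfold Fpot, Fr, Csub, Cadd, Copp, Cmul, RtoC; simpl.
  repeat rewrite Rsgn_pos by lra. f_equal; field.
Qed.

Lemma Rsum_ext N f g : (forall i, (i < N)%nat -> f i = g i) -> Rsum N f = Rsum N g.
Proof. induction N; simpl; intros H; auto. rewrite IHN, H; auto. Qed.
Lemma Rsum_add N f g : Rsum N (fun i => f i + g i) = Rsum N f + Rsum N g.
Proof. induction N; simpl; [ring| rewrite IHN; ring]. Qed.
Lemma Rsum_scal N c f : Rsum N (fun i => c * f i) = c * Rsum N f.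
Proof. induction N; simpl; [ring| rewrite IHN; ring]. Qed.
Lemma Rsum_const N c : Rsum N (fun _ => c) = INR N * c.
Proof. induction N; cbn [Rsum]; [simpl; ring| rewrite IHN, S_INR; ring]. Qed.
Lemma Csum_Re N f : Re (Csum N f) = Rsum N (fun i => Re (f i)).
Proof. induction N; simpl; auto. rewrite IHN; auto. Qed.
Lemma Csum_Im N f : Im (Csum N f) = Rsum N (fun i => Im (f i)).
Proof. induction N; simpl; auto. rewrite IHN; auto. Qed.
Lemma Cx_eq z w : Re z = Re w -> Im z = Im w -> z = w.
Proof. destruct z, w; simpl; intros; subst; auto. Qed.

Definition al N (n : nat -> Z) j := - (/ INR N) * (IZR (n j) - nbar N n).

Lemma al_sum N n : (N > 0)%nat -> Rsum N (al N n) = 0.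
Proof.
  intros HN. unfold al. rewrite Rsum_scal.
  rewrite (Rsum_ext N _ (fun j => IZR (n j) + (-1) * nbar N n)) by (intros; ring).
  rewrite Rsum_add, Rsum_const. unfold nbar.
  assert (INR N <> 0) by (apply not_0_INR; lia). field; auto.
Qed.

Lemma uconf_eq N beta n j : uconf N beta n j = mkC 0 (beta * al N n j).
Proof. unfold uconf, al; f_equal; unfold Rdiv; ring. Qed.
Lemma utconf_eq N beta n j : utconf N beta n j = mkC 0 (beta * - al N n j).
Proof. unfold utconf, al; f_equal; unfold Rdiv; ring. Qed.
Lemma Csum_ext N f g : (forall i, (i < N)%nat -> f i = g i) -> Csum N f = Csum N g.
Proof. induction N; simpl; intros H; auto. rewrite IHN, H; auto. Qed.

Lemma part1 (N : nat) (HN : (2 <= N)%nat)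
  (d1 d2 d3 d4 : R)
  (h1 : 0 < d1 < 2 * PI) (h2 : 0 < d2 < 2 * PI)
  (h3 : 0 < d3 < 2 * PI) (h4 : 0 < d4 < 2 * PI)
  (hsum : d1 + d2 + d3 + d4 = 2 * PI)
  (n nt : nat -> Z) :
  (forall beta : R, 0 < beta ->
     let u := uconf N beta n in
     let ut := utconf N beta nt in
     let v := vconf N beta d1 d2 d3 d4 n in
     let vt := vtconf N beta d1 d2 d3 d4 nt in
     Csum N u = C0 /\ Csum N ut = C0 /\
     (forall i j : nat, (i < N)%nat -> (j < N)%nat ->
        Cadd (Cadd (Cmul (Cmul (RtoC (- (2 * PI))) Ci) (RtoC (IZR (n i))))
                   (Cmul Ci v))
             (Cmul (RtoC (/ beta))
                   (Csum N (fun k => Eij d1 d2 d3 d4 (u i) (ut k)))) = C0 /\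
        Cadd (Csub (Cmul (Cmul (RtoC (- (2 * PI))) Ci) (RtoC (IZR (nt j))))
                   (Cmul Ci vt))
             (Cmul (RtoC (/ beta))
                   (Csum N (fun k => Eij d1 d2 d3 d4 (u k) (ut j)))) = C0)).
Proof.
  intros beta Hb. cbv zeta.
  assert (HN0 : INR N <> 0) by (apply not_0_INR; lia).
  assert (Sa := al_sum N n ltac:(lia)).
  assert (Sb := al_sum N nt ltac:(lia)).
  split; [|split].
  - apply Cx_eq; rewrite ?Csum_Re, ?Csum_Im; simpl.
    + rewrite Rsum_const; ring.
    + rewrite (Rsum_ext N _ (fun i => beta * al N n i)) by (intros; unfold al, Rdiv; ring).
      rewrite Rsum_scal, Sa; ring.
  - apply Cx_eq; rewrite ?Csum_Re, ?Csum_Im; simpl.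
    + rewrite Rsum_const; ring.
    + rewrite (Rsum_ext N _ (fun i => (-beta) * al N nt i)) by (intros; unfold al, Rdiv; ring).
      rewrite Rsum_scal, Sb; ring.
  - intros i j Hi Hj. rewrite !uconf_eq, !utconf_eq.
    split.
    + rewrite (Csum_ext N _ (fun k => mkC (Cconst d1 d2 d3 d4) (-2*PI*(beta * al N n i - beta * - al N nt k))))
        by (intros; rewrite utconf_eq; apply Eij_val; lra).
      apply Cx_eq; simpl; rewrite ?Csum_Re, ?Csum_Im; simpl.
      * rewrite Rsum_const; field; auto with real.
      * rewrite (Rsum_ext N _ (fun k => (-2*PI*beta*al N n i) + (-2*PI*beta) * al N nt k)) by (intros; ring).
        rewrite Rsum_add, Rsum_const, Rsum_scal, Sb. unfold al. field; split; lra.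
    + rewrite (Csum_ext N _ (fun k => mkC (Cconst d1 d2 d3 d4) (-2*PI*(beta * al N n k - beta * - al N nt j))))
        by (intros; rewrite uconf_eq; apply Eij_val; lra).
      apply Cx_eq; simpl; rewrite ?Csum_Re, ?Csum_Im; simpl.
      * rewrite Rsum_const; field; auto with real.
      * rewrite (Rsum_ext N _ (fun k => (-2*PI*beta) * al N n k + (-2*PI*beta*al N nt j))) by (intros; ring).
        rewrite Rsum_add, Rsum_const, Rsum_scal, Sa. unfold al. field; split; lra.
Qed.

Section S.
Variables (N : nat) (HN : (0 < N)%nat) (d1 d2 d3 d4 : R)
  (h1 : 0 < d1) (h2 : 0 < d2) (h3 : 0 < d3) (h4 : 0 < d4)
  (hsum : d1 + d2 + d3 + d4 = 2 * PI) (n nt : nat -> Z) (beta : R) (Hb : 0 < beta).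

Lemma S1_val : Csum N (fun i => Csub (Cmul (RtoC (IZR (n i))) (uconf N beta n i))
   (Cmul (RtoC (IZR (nt i))) (utconf N beta nt i))) =
  mkC 0 (beta * Rsum N (fun i => IZR (n i) * al N n i + IZR (nt i) * al N nt i)).
Proof.
  apply Cx_eq; rewrite ?Csum_Re, ?Csum_Im; simpl.
  - rewrite (Rsum_ext N _ (fun _ => 0)) by (intros; ring). rewrite Rsum_const; ring.
  - rewrite <- Rsum_scal; apply Rsum_ext; intros; unfold al, Rdiv; ring.
Qed.

Lemma S2_val : Csum N (fun i => Cadd (Cmul (vconf N beta d1 d2 d3 d4 n) (uconf N beta n i))
   (Cmul (vtconf N beta d1 d2 d3 d4 nt) (utconf N beta nt i))) = C0.
Proof.
  assert (Sa := al_sum N n HN). assert (Sb := al_sum N nt HN).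
  apply Cx_eq; rewrite ?Csum_Re, ?Csum_Im; simpl.
  - rewrite (Rsum_ext N _ (fun i => (-(INR N / beta * Cconst d1 d2 d3 d4) * beta) * al N n i
        + (-(INR N / beta * Cconst d1 d2 d3 d4) * beta) * al N nt i)) by (intros; unfold al, Rdiv; ring).
    rewrite Rsum_add, !Rsum_scal, Sa, Sb; ring.
  - rewrite (Rsum_ext N _ (fun i => (2 * PI * nbar N n * beta) * al N n i
        + (2 * PI * nbar N nt * beta) * al N nt i)) by (intros; unfold al, Rdiv; ring).
    rewrite Rsum_add, !Rsum_scal, Sa, Sb; ring.
Qed.

Lemma dRe (f : nat -> nat -> Cx) : Re (Csum N (fun i => Csum N (fun j => f i j))) =
  Rsum N (fun i => Rsum N (fun j => Re (f i j))).
Proof. rewrite Csum_Re; apply Rsum_ext; intros; apply Csum_Re. Qed.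
Lemma dIm (f : nat -> nat -> Cx) : Im (Csum N (fun i => Csum N (fun j => f i j))) =
  Rsum N (fun i => Rsum N (fun j => Im (f i j))).
Proof. rewrite Csum_Im; apply Rsum_ext; intros; apply Csum_Im. Qed.

Definition SF := Fr d1 + Fr d2 + Fr d3 + Fr d4.
Definition Q := Rsum N (fun i => Rsum N (fun j => PI * (al N n i + al N nt j) ^ 2)).

Lemma S3_val : Csum N (fun i => Csum N (fun j =>
     Wij d1 d2 d3 d4 (uconf N beta n i) (utconf N beta nt j))) =
  mkC (INR N * (INR N * SF) + beta ^ 2 * Q) 0.
Proof.
  assert (Sa := al_sum N n HN). assert (Sb := al_sum N nt HN).
  apply Cx_eq; rewrite ?dRe, ?dIm; cbn [Re Im].
  - rewrite (Rsum_ext N _ (fun i => INR N * SF + beta^2 * Rsum N (fun j => PI * (al N n i + al N nt j) ^ 2))).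
    + rewrite Rsum_add, Rsum_const, Rsum_scal; unfold Q; ring.
    + intros i Hi. rewrite (Rsum_ext N _ (fun j => SF + beta^2 * (PI * (al N n i + al N nt j) ^ 2))).
      * rewrite Rsum_add, Rsum_const, Rsum_scal; ring.
      * intros j Hj. rewrite uconf_eq, utconf_eq, Wij_val by lra. simpl. unfold SF; ring.
  - rewrite (Rsum_ext N _ (fun i => (Cconst d1 d2 d3 d4 * beta * INR N) * al N n i)).
    + rewrite Rsum_scal, Sa; ring.
    + intros i Hi. rewrite (Rsum_ext N _ (fun j => Cconst d1 d2 d3 d4 * beta * al N n i + (Cconst d1 d2 d3 d4 * beta) * al N nt j)).
      * rewrite Rsum_add, Rsum_const, Rsum_scal, Sb; ring.
      * intros j Hj. rewrite uconf_eq, utconf_eq, Wij_val by lra. simpl. ring.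
Qed.

Definition K0 := 2 * PI * Rsum N (fun i => IZR (n i) * al N n i + IZR (nt i) * al N nt i) + Q.

Lemma V_val : Bethe N beta d1 d2 d3 d4 n nt
                  (uconf N beta n) (utconf N beta nt)
                  (vconf N beta d1 d2 d3 d4 n) (vtconf N beta d1 d2 d3 d4 nt)
  = mkC 0 (INR N ^ 2 * SF / beta + beta * K0).
Proof.
  unfold Bethe. rewrite S1_val, S2_val, S3_val.
  apply Cx_eq; simpl; unfold K0; field; lra.
Qed.
End S.
Lemma Cmod_im y : Cmod (mkC 0 y) = Rabs y.
Proof. unfold Cmod; simpl. rewrite <- sqrt_Rsqr_abs. f_equal. unfold Rsqr; ring. Qed.

Lemma part2 (N : nat) (HN : (2 <= N)%nat)
  (d1 d2 d3 d4 : R)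
  (h1 : 0 < d1 < 2 * PI) (h2 : 0 < d2 < 2 * PI)
  (h3 : 0 < d3 < 2 * PI) (h4 : 0 < d4 < 2 * PI)
  (hsum : d1 + d2 + d3 + d4 = 2 * PI)
  (n nt : nat -> Z) :
  (exists K delta : R, 0 < delta /\
     forall beta : R, 0 < beta < delta ->
       let V := Bethe N beta d1 d2 d3 d4 n nt
                  (uconf N beta n) (utconf N beta nt)
                  (vconf N beta d1 d2 d3 d4 n) (vtconf N beta d1 d2 d3 d4 nt) in
       Cmod (Csub V (Cmul (mkC 0 (INR N ^ 2 / beta))
                (Cadd (Cadd (Fpot (RtoC d1)) (Fpot (RtoC d2)))
                      (Cadd (Fpot (RtoC d3)) (Fpot (RtoC d4)))))) <= K * beta /\
       Cmod (Csub V (mkC 0 (INR N ^ 2 / (2 * beta) *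
                (d1 * d2 * d3 + d1 * d2 * d4 + d1 * d3 * d4 + d2 * d3 * d4))))
         <= K * beta).
Proof.
  exists (Rabs (K0 N n nt)), 1. split; [lra|].
  intros beta Hb. cbv zeta.
  assert (HV := V_val N ltac:(lia) d1 d2 d3 d4 ltac:(lra) ltac:(lra) ltac:(lra) ltac:(lra) hsum n nt beta ltac:(lra)).
  rewrite HV.
  assert (HSF : SF d1 d2 d3 d4 = (d1 * d2 * d3 + d1 * d2 * d4 + d1 * d3 * d4 + d2 * d3 * d4) / 2).
  { unfold SF, Fr. assert (E : d4 = 2*PI - d1 - d2 - d3) by lra. subst d4. field. }
  rewrite !Fpot_val by lra.
  assert (HA : forall z, z = mkC 0 (beta * K0 N n nt) -> Cmod z <= Rabs (K0 N n nt) * beta).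
  { intros z ->. rewrite Cmod_im, Rabs_mult, Rabs_right by lra. lra. }
  assert (HSF' : Fr d1 + Fr d2 + (Fr d3 + Fr d4) = (d1 * d2 * d3 + d1 * d2 * d4 + d1 * d3 * d4 + d2 * d3 * d4) / 2).
  { rewrite <- HSF; unfold SF; ring. }
  split; apply HA; apply Cx_eq; simpl; rewrite ?HSF, ?HSF'; field; lra.
Qed.
Theorem mainTheorem7 (N : nat) (HN : (2 <= N)%nat)
  (d1 d2 d3 d4 : R)
  (h1 : 0 < d1 < 2 * PI) (h2 : 0 < d2 < 2 * PI)
  (h3 : 0 < d3 < 2 * PI) (h4 : 0 < d4 < 2 * PI)
  (hsum : d1 + d2 + d3 + d4 = 2 * PI)
  (n nt : nat -> Z) :
  (forall beta : R, 0 < beta ->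
     let u := uconf N beta n in
     let ut := utconf N beta nt in
     let v := vconf N beta d1 d2 d3 d4 n in
     let vt := vtconf N beta d1 d2 d3 d4 nt in
     Csum N u = C0 /\ Csum N ut = C0 /\
     (forall i j : nat, (i < N)%nat -> (j < N)%nat ->
        Cadd (Cadd (Cmul (Cmul (RtoC (- (2 * PI))) Ci) (RtoC (IZR (n i))))
                   (Cmul Ci v))
             (Cmul (RtoC (/ beta))
                   (Csum N (fun k => Eij d1 d2 d3 d4 (u i) (ut k)))) = C0 /\
        Cadd (Csub (Cmul (Cmul (RtoC (- (2 * PI))) Ci) (RtoC (IZR (nt j))))
                   (Cmul Ci vt))
             (Cmul (RtoC (/ beta))
                   (Csum N (fun k => Eij d1 d2 d3 d4 (u k) (ut j)))) = C0)) /\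
  (exists K delta : R, 0 < delta /\
     forall beta : R, 0 < beta < delta ->
       let V := Bethe N beta d1 d2 d3 d4 n nt
                  (uconf N beta n) (utconf N beta nt)
                  (vconf N beta d1 d2 d3 d4 n) (vtconf N beta d1 d2 d3 d4 nt) in
       Cmod (Csub V (Cmul (mkC 0 (INR N ^ 2 / beta))
                (Cadd (Cadd (Fpot (RtoC d1)) (Fpot (RtoC d2)))
                      (Cadd (Fpot (RtoC d3)) (Fpot (RtoC d4)))))) <= K * beta /\
       Cmod (Csub V (mkC 0 (INR N ^ 2 / (2 * beta) *
                (d1 * d2 * d3 + d1 * d2 * d4 + d1 * d3 * d4 + d2 * d3 * d4))))
         <= K * beta).
Proof.
  split; [apply part1 | apply part2]; auto.
Qed.
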